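(* Let $X_t$ and $Y_t$ be two independent real-valued Lévy processes and assume $X_t$ has the local coupling property. Then the Lévy process $X_t+Y_t$ has the local coupling property.
   Context: A real-valued Lévy process is regarded as a Markov process on $\mathbb{R}$. The local coupling property: for every $x\in\mathbb{R}$ and $\epsilon>0$ there exists $\delta>0$ such that for every $y$ with $|y-x|<\delta$ there is a coupling $(X_t,Y_t)$ of the laws of the process started at $x$ and at $y$, such that $T=\inf\{t\ge0:X_t=Y_t\}$ satisfies $P(T>\epsilon)<\epsilon$. *)

(* Defs.v *)
From HB Require Import structures.
From mathcomp Require Import all_boot all_order all_algebra.
From mathcomp Require Import all_classical all_reals all_analysis.

Set Implicit Arguments.
Unset Strict Implicit.
Unset Printing Implicit Defensive.

Import Order.TTheory GRing.Theory Num.Theory.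
Import numFieldNormedType.Exports.
Local Open Scope classical_set_scope.
Local Open Scope ring_scope.

(* A real-valued stochastic process indexed by time t >= 0 is modelled as
   X : R -> Omega -> R; only the values at t >= 0 are ever used. *)

Definition cadlag_paths (R : realType) (Omega : Type) (X : R -> Omega -> R) :=
  forall w : Omega,
    (forall t : R, 0 <= t -> (fun s => X s w) x @[x --> t^'+] --> X t w) /\
    (forall t : R, 0 < t -> cvg ((fun s => X s w) @ t^'-)).

Definition levy_process (R : realType) (d : measure_display)
    (Omega : measurableType d) (P : probability Omega R) (X : R -> Omega -> R) :=
  [/\ (forall t : R, measurable_fun setT (X t)),
      (forall w, X 0 w = 0),
      cadlag_paths X,
      (forall (n : nat) (t : nat -> R) (B : nat -> set R),
         0 <= t 0%N ->
         (forall i : nat, (i < n)%N -> t i < t i.+1) ->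
         (forall i : nat, (i < n)%N -> measurable (B i)) ->
         P [set w | forall i : nat, (i < n)%N -> B i (X (t i.+1) w - X (t i) w)] =
         (\prod_(i < n) P [set w | B i (X (t i.+1) w - X (t i) w)%R])%E) &
      (forall (s t : R) (B : set R), 0 <= s -> 0 <= t -> measurable B ->
         P [set w | B (X (t + s) w - X s w)] = P [set w | B (X t w)])].

Definition process_sigma (R : realType) (Omega : Type) (X : R -> Omega -> R)
  : set (set Omega) :=
  <<s [set A | exists t : R, exists B : set R,
                 [/\ 0 <= t, measurable B & A = X t @^-1` B]] >>.

Definition independent_processes (R : realType) (d : measure_display)
    (Omega : measurableType d) (P : probability Omega R) (X Y : R -> Omega -> R) :=
  forall A B : set Omega, process_sigma X A -> process_sigma Y B ->
    P (A `&` B) = (P A * P B)%E.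

(* The process U (on (Omega', P')) has the law of the process X started at x,
   i.e. of (x + X t)_{t >= 0} on (Omega, P): all finite-dimensional
   distributions agree (for cadlag processes these determine the law on
   path space). *)
Definition same_fdd (R : realType)
    (d : measure_display) (Omega : measurableType d) (P : probability Omega R)
    (X : R -> Omega -> R) (x : R)
    (d' : measure_display) (Omega' : measurableType d') (P' : probability Omega' R)
    (U : R -> Omega' -> R) :=
  forall (n : nat) (t : 'I_n -> R) (B : 'I_n -> set R),
    (forall i, 0 <= t i) -> (forall i, measurable (B i)) ->
    P' [set w | forall i, B i (U (t i) w)] =
    P [set w | forall i, B i (x + X (t i) w)].

(* coupling time T = inf {t >= 0 : U t = V t} (inf of the empty set = +oo) *)
Definition coupling_time (R : realType) (Omega : Type)
    (U V : R -> Omega -> R) (w : Omega) : \bar R :=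
  ereal_inf [set t%:E | t in [set t : R | 0 <= t /\ U t w = V t w]].

(* The probability P(T > eps) is read as an outer
   probability (it is the genuine probability whenever {T > eps} is
   measurable). *)
Definition local_coupling (R : realType) (d : measure_display)
    (Omega : measurableType d) (P : probability Omega R) (X : R -> Omega -> R) :=
  forall (x eps : R), 0 < eps ->
  exists2 delta : R, 0 < delta &
  forall y : R, `|y - x| < delta ->
    exists (d' : measure_display) (Omega' : measurableType d')
           (P' : probability Omega' R) (U V : R -> Omega' -> R),
      [/\ (forall t, measurable_fun setT (U t) /\ measurable_fun setT (V t)),
          cadlag_paths U /\ cadlag_paths V,
          same_fdd P X x P' U,
          same_fdd P X y P' V &
          (exists A : set Omega', [/\ measurable A,
             [set w | (eps%:E < coupling_time U V w)%E] `<=` A &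
             (P' A < eps%:E)%E])].

(* Main.v *)
Require Import Defs.
From HB Require Import structures.
From mathcomp Require Import all_boot all_order all_algebra.
From mathcomp Require Import all_classical all_reals all_analysis.

Import Order.TTheory GRing.Theory Num.Theory.
Import numFieldNormedType.Exports.
Local Open Scope classical_set_scope.
Local Open Scope ring_scope.

Set Implicit Arguments.
Section indep.
Context (R : realType) (d : measure_display) (Omega : measurableType d)
  (P : probability Omega R) (X Y : R -> Omega -> R).
Hypothesis mX : forall t, measurable_fun setT (X t).
Hypothesis mY : forall t, measurable_fun setT (Y t).
Hypothesis indep : independent_processes P X Y.

Definition diagw (w : Omega) : Omega * Omega := (w, w).

Lemma mdiag : measurable_fun setT diagw.
Proof. exact: measurable_fun_pair. Qed.

Definition rects : set (set (Omega * Omega)) :=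
  [set C | exists A B, [/\ process_sigma Y A, process_sigma X B & C = A `*` B]].

Lemma process_sigma_meas (Z : R -> Omega -> R) :
  (forall t, measurable_fun setT (Z t)) -> process_sigma Z `<=` @measurable _ Omega.
Proof.
move=> mZ; apply: smallest_sub; first exact: sigma_algebra_measurable.
move=> A [t [B [t0 mB ->]]].
by rewrite -[X in measurable X]setTI; apply: mZ.
Qed.

Lemma process_sigmaT (Z : R -> Omega -> R) : process_sigma Z setT.
Proof. exact: (@measurableT _ (g_sigma_algebraType _)). Qed.

Lemma process_sigmaI (Z : R -> Omega -> R) A B :
  process_sigma Z A -> process_sigma Z B -> process_sigma Z (A `&` B).
Proof. exact: (@measurableI _ (g_sigma_algebraType _)). Qed.

Lemma rects_meas : rects `<=` measurable.
Proof.
move=> C [A [B [hA hB ->]]]; apply: measurableX.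
exact: (process_sigma_meas mY hA). exact: (process_sigma_meas mX hB).
Qed.

Lemma rectsI : setI_closed rects.
Proof.
move=> C1 C2 [A1 [B1 [hA1 hB1 ->]]] [A2 [B2 [hA2 hB2 ->]]].
exists (A1 `&` A2), (B1 `&` B2); split.
- exact: process_sigmaI.
- exact: process_sigmaI.
- by rewrite setXI.
Qed.

Section key.
Definition m2 := fun A => P (diagw @^-1` A).
Let m20 : m2 set0 = 0%E.
Proof. by rewrite /m2 preimage_set0 measure0. Qed.
Let m2_ge0 A : (0 <= m2 A)%E.
Proof. exact: measure_ge0. Qed.
Let m2_sigma_additive : semi_sigma_additive m2.
Proof.
move=> F mF tF mUF; rewrite /m2 preimage_bigcup.
apply: measure_semi_sigma_additive.
- by move=> n; rewrite -[X in measurable X]setTI; exact: mdiag.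
- apply/trivIsetP => /= i j _ _ ij; rewrite -preimage_setI.
  by move/trivIsetP : tF => /(_ _ _ _ _ ij) ->//; rewrite preimage_set0.
- by rewrite -preimage_bigcup -[X in measurable X]setTI; exact: mdiag.
Qed.
HB.instance Definition _ := isMeasure.Build _ _ _ m2 m20 m2_ge0 m2_sigma_additive.

Lemma key S : <<s rects >> S -> (P \x P)%E S = P (diagw @^-1` S).
Proof.
apply: (g_sigma_algebra_measure_unique rects rects_meas (fun _ => setT)
  _ _ (P \x P)%E m2 rectsI).
- move=> _; exists setT, setT; split; [exact: process_sigmaT|exact: process_sigmaT|by rewrite setXTT].
- by rewrite bigcup_const.
- move=> C [A [B [hA hB ->]]].
  apply: (eq_trans (@product_measure1E _ _ Omega Omega R P P A B (process_sigma_meas mY hA) (process_sigma_meas mX hB))).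

  change ((P A * P B)%E = P (diagw @^-1` (A `*` B))).
  have -> : diagw @^-1` (A `*` B) = B `&` A by apply/seteqP; split => w /=; rewrite /diagw/=; move=> [] *; split.
  by rewrite indep // muleC.
- move=> _; have h : forall m : probability (Omega * Omega)%type R, (m setT < +oo)%E by move=> m; rewrite probability_setT ltry.
  exact: h.
Qed.
End key.

Lemma S2_meas n (t : 'I_n -> R) (B : 'I_n -> set R) (x : R) :
  (forall i, 0 <= t i) -> (forall i, measurable (B i)) ->
  <<s rects >> [set p : Omega * Omega | forall i, B i (x + X (t i) p.2 + Y (t i) p.1)].
Proof.
move=> t0 mB.
pose GT := g_sigma_algebraType rects.
have mfX s : 0 <= s -> measurable_fun (setT : set GT) (fun p : GT => X s p.2).
  move=> s0 _ C mC; apply: sub_sigma_algebra.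
  exists setT, (X s @^-1` C); split.
  - exact: process_sigmaT.
  - by apply: sub_sigma_algebra; exists s, C.
  - by apply/seteqP; split => p /=; [move=> [_ h]; split|move=> [_ h]].
have mfY s : 0 <= s -> measurable_fun (setT : set GT) (fun p : GT => Y s p.1).
  move=> s0 _ C mC; apply: sub_sigma_algebra.
  exists (Y s @^-1` C), setT; split.
  - by apply: sub_sigma_algebra; exists s, C.
  - exact: process_sigmaT.
  - by apply/seteqP; split => p /=; [move=> [_ h]; split|move=> [h _]].
have mf i : measurable_fun (setT : set GT)
    (fun p : GT => x + X (t i) p.2 + Y (t i) p.1).
  apply: measurable_realfun.measurable_funD; last exact: mfY.
  by apply: measurable_realfun.measurable_funD; [exact: measurable_cst|exact: mfX].
have -> : [set p : Omega * Omega | forall i, B i (x + X (t i) p.2 + Y (t i) p.1)]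
   = \bigcap_(i in setT) ((fun p : GT => x + X (t i) p.2 + Y (t i) p.1) @^-1` B i).
  by apply/seteqP; split => p /= h i; [move=> _; exact: h|exact: h].
apply: (@fin_bigcap_measurable _ GT); first exact: finite_finset.
by move=> i _; rewrite -[X in measurable X]setTI; apply: mf.
Qed.
End indep.

Lemma fdd_lemma (R : realType) (d : measure_display) (Omega : measurableType d)
  (P : probability Omega R) (X Y : R -> Omega -> R)
  (mX : forall t, measurable_fun setT (X t))
  (mY : forall t, measurable_fun setT (Y t))
  (indep : independent_processes P X Y)
  (d' : measure_display) (Om' : measurableType d') (P' : probability Om' R)
  (U : R -> Om' -> R) (x : R) :
  same_fdd P X x P' U ->
  same_fdd P (fun t w => X t w + Y t w) x (P \x P')%E
    (fun t p => U t p.2 + Y t p.1).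
Proof.
move=> hU n t B t0 mB.
transitivity ((P \x P)%E [set p : Omega * Omega | forall i, B i (x + X (t i) p.2 + Y (t i) p.1)]).
  rewrite /product_measure1 /=.
  apply: eq_integral => w _ /=.
  have e1 : xsection [set w0 : Omega * Om' | forall i, B i (U (t i) w0.2 + Y (t i) w0.1)] w
     = [set w' | forall i, (fun i => [set a | B i (a + Y (t i) w)]) i (U (t i) w')].
    by apply/seteqP; split => w'; rewrite /xsection /= in_setE.
  have e2 : xsection [set p : Omega * Omega | forall i, B i (x + X (t i) p.2 + Y (t i) p.1)] w
     = [set v | forall i, (fun i => [set a | B i (a + Y (t i) w)]) i (x + X (t i) v)].
    by apply/seteqP; split => w'; rewrite /xsection /= in_setE.
  rewrite e1 e2; apply: (hU n t (fun i => [set a | B i (a + Y (t i) w)])) => // i.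
  rewrite -[X in measurable X]setTI.
  have h := (@measurable_realfun.measurable_funD _ R R setT idfun (cst (Y (t i) w)) (@measurable_id _ R setT) (measurable_cst (Y (t i) w)) measurableT _ (mB i)). exact: h.
rewrite (key mX mY indep (@S2_meas R d Omega X Y n t B x t0 mB)).
congr (P _); apply/seteqP; split => w /= h i; have := h i; by rewrite addrA.
Qed.

Lemma cadlag_add (R : realType) (O1 O2 : Type) (U : R -> O2 -> R) (Y : R -> O1 -> R) :
  cadlag_paths U -> cadlag_paths Y ->
  cadlag_paths (fun t (p : O1 * O2) => U t p.2 + Y t p.1).
Proof.
move=> cU cY [w w']; split.
- move=> t t0; apply: cvgD; [exact: (cU w').1 t t0|exact: (cY w).1 t t0].
- move=> t t0; apply: is_cvgD; [exact: (cU w').2 t t0|exact: (cY w).2 t t0].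
Qed.

Lemma coupling_add (R : realType) (O1 O2 : Type) (U V : R -> O2 -> R) (Y : R -> O1 -> R) p :
  coupling_time (fun t (p : O1 * O2) => U t p.2 + Y t p.1)
    (fun t (p : O1 * O2) => V t p.2 + Y t p.1) p = coupling_time U V p.2.
Proof.
rewrite /coupling_time; congr ereal_inf; congr image.
apply/seteqP; split => s /= [s0 e]; split => //; [exact: (addIr _ e)|by rewrite e].
Qed.

Theorem corollary3p4 (R : realType) (d : measure_display)
    (Omega : measurableType d) (P : probability Omega R)
    (X Y : R -> Omega -> R) :
  levy_process P X -> levy_process P Y ->
  independent_processes P X Y ->
  local_coupling P X ->
  local_coupling P (fun t w => X t w + Y t w).
Proof.
move=> [mX X0 cX _ _] [mY Y0 cY _ _] ind lcX x eps eps0.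
have [delta d0 H] := lcX x eps eps0.
exists delta => // y hy.
have [d' [Om' [P' [U [V [mUV [cU cV] fU fV [A [mA sub PA]]]]]]]] := H y hy.
exists (measure_prod_display (d, d')), (Omega * Om')%type, (P \x P')%E,
  (fun t p => U t p.2 + Y t p.1), (fun t p => V t p.2 + Y t p.1).
split.
- move=> t; split; apply: measurable_realfun.measurable_funD.
  + exact: (measurableT_comp (mUV t).1 measurable_snd).
  + exact: (measurableT_comp (mY t) measurable_fst).
  + exact: (measurableT_comp (mUV t).2 measurable_snd).
  + exact: (measurableT_comp (mY t) measurable_fst).
- by split; apply: cadlag_add.
- exact: fdd_lemma.
- exact: fdd_lemma.
- exists (setT `*` A); split.
  + exact: measurableX.
  + move=> p /= h; split => //; apply: sub => /=.
    by rewrite -(@coupling_add R Omega Om' U V Y p).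
  + have E : (P \x P')%E (setT `*` A) = P' A.
      apply: (eq_trans (@product_measure1E _ _ Omega Om' R P P' setT A measurableT mA)).
      transitivity (1 * P' A)%E; last exact: mul1e.
      congr (_ * _)%E; exact: probability_setT.
    by move: PA; rewrite -E.
Qed.
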